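(* Let $\boldsymbol\pi\in H_{1,2,2}$ be a primary prime quaternion and $p=N(\boldsymbol\pi)$. Then the p-conjugate $\overline{\boldsymbol\pi}_p$ equals $\overline{\boldsymbol\pi}$ if $p\equiv1\pmod4$ and equals $-\overline{\boldsymbol\pi}$ if $p\equiv-1\pmod4$.
   Context: Let $\mathbf{i},\mathbf{j},\mathbf{k}$ be the standard quaternion units; $\overline{\mathbf{q}}$ is quaternion conjugation and $N(\mathbf{q})=\mathbf{q}\overline{\mathbf{q}}$. $H_{1,2,2}$ is the subring of the quaternions equal to the $\mathbb{Z}$-module generated by $\mathbf{v}_1=1$, $\mathbf{v}_2=\mathbf{i}$, $\mathbf{v}_3=\tfrac12(1+\mathbf{i}+\sqrt2\,\mathbf{j})$, $\mathbf{v}_4=\tfrac12(1+\mathbf{i}+\sqrt2\,\mathbf{k})$. A prime of $H_{1,2,2}$ is a nonzero non-invertible element $\boldsymbol\pi$ such that any factorization $\boldsymbol\pi=\mathbf{a}\mathbf{b}$ in $H_{1,2,2}$ has $\mathbf{a}$ or $\mathbf{b}$ invertible. Let $I=2(1+\mathbf{i})H_{1,2,2}$ (equal to $H_{1,2,2}\,2(1+\mathbf{i})$). An element $\mathbf{q}\in H_{1,2,2}$ is primary if $\mathbf{q}-1\in I$ or $\mathbf{q}-(1+2\mathbf{v}_3)\in I$. For a primary prime $\boldsymbol\pi$, its p-conjugate is $\overline{\boldsymbol\pi}_p=\overline{\boldsymbol\pi}$ if $\boldsymbol\pi-1\in I$ and $\overline{\boldsymbol\pi}_p=-\overline{\boldsymbol\pi}$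 if $\boldsymbol\pi-(1+2\mathbf{v}_3)\in I$. *)

(* Defs.v *)
From Stdlib Require Import Reals ZArith Classical ClassicalEpsilon.
Open Scope R_scope.

Record quat := Quat { qre : R; qim : R; qjm : R; qkm : R }.

Definition qadd (p q : quat) : quat :=
  Quat (qre p + qre q) (qim p + qim q) (qjm p + qjm q) (qkm p + qkm q).
Definition qopp (p : quat) : quat := Quat (- qre p) (- qim p) (- qjm p) (- qkm p).
Definition qsub (p q : quat) : quat := qadd p (qopp q).
Definition qmul (p q : quat) : quat :=
  Quat (qre p * qre q - qim p * qim q - qjm p * qjm q - qkm p * qkm q)
       (qre p * qim q + qim p * qre q + qjm p * qkm q - qkm p * qjm q)
       (qre p * qjm q - qim p * qkm q + qjm p * qre q + qkm p * qim q)
       (qre p * qkm q + qim p * qjm q - qjm p * qim q + qkm p * qre q).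
Definition qconj (p : quat) : quat := Quat (qre p) (- qim p) (- qjm p) (- qkm p).
Definition qscal (r : R) : quat := Quat r 0 0 0.
Definition qzero : quat := qscal 0.
Definition qone : quat := qscal 1.
Definition qi : quat := Quat 0 1 0 0.
Definition qj : quat := Quat 0 0 1 0.
Definition qk : quat := Quat 0 0 0 1.
Definition qsmul (r : R) (p : quat) : quat := qmul (qscal r) p.

Definition qN (q : quat) : quat := qmul q (qconj q).

Definition v1 : quat := qone.
Definition v2 : quat := qi.
Definition v3 : quat := qsmul (1/2) (qadd (qadd qone qi) (qsmul (sqrt 2) qj)).
Definition v4 : quat := qsmul (1/2) (qadd (qadd qone qi) (qsmul (sqrt 2) qk)).

(* membership in H_{1,2,2}: the Z-module generated by v1..v4 *)
Definition inH (q : quat) : Prop :=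
  exists n1 n2 n3 n4 : Z,
    q = qadd (qadd (qsmul (IZR n1) v1) (qsmul (IZR n2) v2))
             (qadd (qsmul (IZR n3) v3) (qsmul (IZR n4) v4)).

Definition unitH (q : quat) : Prop :=
  inH q /\ exists r, inH r /\ qmul q r = qone /\ qmul r q = qone.

Definition primeH (pi : quat) : Prop :=
  inH pi /\ pi <> qzero /\ ~ unitH pi /\
  forall a b, inH a -> inH b -> pi = qmul a b -> unitH a \/ unitH b.

Definition inI (q : quat) : Prop :=
  exists h, inH h /\ q = qmul (qsmul 2 (qadd qone qi)) h.

Definition primary (q : quat) : Prop :=
  inH q /\
  (inI (qsub q qone) \/ inI (qsub q (qadd qone (qsmul 2 v3)))).

Definition pconj (pi : quat) : quat :=
  if excluded_middle_informative (inI (qsub pi qone)) then qconj pi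
  else qopp (qconj pi).

(* Main.v *)
Require Import Defs.
From Stdlib Require Import Reals ZArith Lra Lia Classical ClassicalEpsilon.
Open Scope R_scope.

Lemma case1 (pi : quat) (p : Z) : inI (qsub pi qone) -> qre (qN pi) = IZR p ->
  (p mod 4 = 1)%Z.
Proof.
  intros [h [[m1 [m2 [m3 [m4 Hh]]]] E]] Hp. subst h.
  destruct pi as [a b c d].
  unfold qsub, qadd, qopp, qone, qmul, qsmul, qscal, qi, v1, v2, v3, v4, qj, qk in E.
  pose proof (f_equal qre E) as E1; pose proof (f_equal qim E) as E2;
  pose proof (f_equal qjm E) as E3; pose proof (f_equal qkm E) as E4; simpl in E1, E2, E3, E4.
  clear E.
  unfold qN, qmul, qconj in Hp; simpl in Hp.
  set (r := sqrt 2) in *. assert (hr : r * r = 2) by (unfold r; rewrite sqrt_sqrt; lra).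
  ring_simplify in E1. ring_simplify in E2. ring_simplify in E3. ring_simplify in E4.
  assert (Hc : c * c = (IZR m3 - IZR m4)^2 * 2).
  { rewrite <- hr, E3. field. }
  assert (Hd : d * d = (IZR m3 + IZR m4)^2 * 2).
  { rewrite <- hr, E4. field. }
  assert (Ha : a = 1 + 2 * IZR m1 - 2 * IZR m2) by lra.
  assert (IZR p = IZR (1 + (m1 - m2 + 2*(m1*m1+m2*m2+(m3+m4)*(m1+m2)+m3*m3+m4*m4+m3*m4)) * 4)).
  { rewrite <- Hp. rewrite ?plus_IZR, ?mult_IZR, ?minus_IZR, ?plus_IZR, ?mult_IZR, ?minus_IZR, ?plus_IZR, ?mult_IZR.
    replace (a * a - b * - b - c * - c - d * - d) with (a*a + b*b + c*c + d*d) by ring.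
    rewrite Hc, Hd, Ha, E2. repeat rewrite ?plus_IZR, ?mult_IZR, ?minus_IZR. field. }
  apply eq_IZR in H. subst p. 
  rewrite Z_mod_plus_full. reflexivity.
Qed.
Lemma case2 (pi : quat) (p : Z) : inI (qsub pi (qadd qone (qsmul 2 v3))) -> qre (qN pi) = IZR p ->
  (p mod 4 = 3)%Z.
Proof.
  intros [h [[m1 [m2 [m3 [m4 Hh]]]] E]] Hp. subst h.
  destruct pi as [a b c d].
  unfold qsub, qadd, qopp, qone, qmul, qsmul, qscal, qi, v1, v2, v3, v4, qj, qk in E.
  pose proof (f_equal qre E) as E1; pose proof (f_equal qim E) as E2;
  pose proof (f_equal qjm E) as E3; pose proof (f_equal qkm E) as E4; simpl in E1, E2, E3, E4.
  clear E.
  unfold qN, qmul, qconj in Hp; simpl in Hp.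
  set (r := sqrt 2) in *. assert (hr : r * r = 2) by (unfold r; rewrite sqrt_sqrt; lra).
  ring_simplify in E1. ring_simplify in E2. ring_simplify in E3. ring_simplify in E4.
  assert (Hc0 : c = (1 + IZR m3 - IZR m4) * r) by lra.
  assert (Hd0 : d = (IZR m3 + IZR m4) * r) by lra.
  assert (Hc : c * c = (1 + IZR m3 - IZR m4)^2 * 2).
  { rewrite <- hr, Hc0. ring. }
  assert (Hd : d * d = (IZR m3 + IZR m4)^2 * 2).
  { rewrite <- hr, Hd0. ring. }
  assert (Ha : a = 2 + 2 * IZR m1 - 2 * IZR m2) by lra.
  assert (Hb : b = 1 + 2 * (IZR m1 + IZR m2 + IZR m3 + IZR m4)) by lra.
  assert (IZR p = IZR (3 + ((1+m1-m2)*(1+m1-m2) + (m1+m2+m3+m4) + (m1+m2+m3+m4)*(m1+m2+m3+m4)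
     + m3 - m4 + m3*m3 + m4*m4) * 4)).
  { rewrite <- Hp.
    replace (a * a - b * - b - c * - c - d * - d) with (a*a + b*b + c*c + d*d) by ring.
    rewrite Hc, Hd, Ha, Hb. repeat rewrite ?plus_IZR, ?mult_IZR, ?minus_IZR. ring. }
  apply eq_IZR in H. subst p.
  rewrite Z_mod_plus_full. reflexivity.
Qed.

Theorem lemma50 (pi : quat) (p : Z) :
  primeH pi -> primary pi -> qN pi = qscal (IZR p) ->
  ((p mod 4 = 1)%Z -> pconj pi = qconj pi) /\
  ((p mod 4 = 3)%Z -> pconj pi = qopp (qconj pi)).
Proof.
  intros _ [_ Hpr] HN.
  assert (Hp : qre (qN pi) = IZR p) by (rewrite HN; reflexivity).
  unfold pconj. destruct (excluded_middle_informative (inI (qsub pi qone))) as [H1|H1].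
  - pose proof (case1 _ _ H1 Hp). split; intros; [reflexivity | lia].
  - destruct Hpr as [H|H]; [contradiction|].
    pose proof (case2 _ _ H Hp). split; intros; [lia | reflexivity].
Qed.
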